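(* For every $y_0\in Y$, $\Gamma_{per}(y_0)\subset W_1(y_0)$ and $V_{per}(y_0)\ge k^*(y_0)$.
   Context: Let $Y\subset\mathbb{R}^m$ be nonempty compact, $U_0$ a compact metric space, $U(\cdot):Y\rightsquigarrow U_0$ upper semicontinuous and compact-valued, and $f:\mathbb{R}^m\times U_0\to\mathbb{R}^m$, $k:\mathbb{R}^m\times U_0\to\mathbb{R}$ continuous. Put $A(y):=\{u\in U(y): f(y,u)\in Y\}$ and $G:=\{(y,u):y\in Y,\ u\in A(y)\}$. Standing assumption: $A(y)\ne\emptyset$ for all $y$. An admissible process from $z\in Y$ on a time range is a pair $(y(t),u(t))$ with $y(0)=z$, $u(t)\in A(y(t))$ and $y(t+1)=f(y(t),u(t))$. Let $\mathcal U_{\bar t}(y_0)$ denote the admissible controls from $y_0$ on $\{0,\dots,\bar t-1\}$. Periodic processes: - For an integer $\mathcal T>0$, a $\mathcal T$-periodic admissible process $(y_{\mathcal T}(\cdot),u_{\mathcal T}(\cdot))$ is an admissible process on $\{0,1,\dots\}$ (from $y_{\mathcal T}(0)$) satisfying $(y_{\mathcal T}(t+\mathcal T),u_{\mathcal T}(t+\mathcal T))=(y_{\mathcal T}(t),u_{\mathcal T}(t))$ for all $t$. - Such a process is finite-time reachable from $y_0$ if there exist an integer $\bar t\ge0$ and a control $u\in\mathcal U_{\bar t}(y_0)$ whose trajectory satisfies $y(\bar t)=y_{\mathcal T}(0)$. - $\Gamma_{per}(y_0)$ is the set of Borel probability measures $\gamma$ on $G$ of the form $\gamma(Q)=\frac1{\mathcal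 T}\sum_{t=0}^{\mathcal T-1}1_Q(y_{\mathcal T}(t),u_{\mathcal T}(t))$ generated by such finite-time-reachable periodic processes. - $V_{per}(y_0):=\inf\frac1{\mathcal T}\sum_{t=0}^{\mathcal T-1}k(y_{\mathcal T}(t),u_{\mathcal T}(t))$, where the infimum is over all $\mathcal T$ and all such processes. Measure spaces and LP objects: - $\mathcal P(G)$ denotes the Borel probability measures on $G$ and $\mathcal M_+(G)$ the finite nonnegative Borel measures on $G$. - $W:=\{\gamma\in\mathcal P(G):\int_G(\varphi(f(y,u))-\varphi(y))\,d\gamma=0\ \forall\varphi\in C(Y)\}$. - $W_1(y_0)$ is the set of $\gamma\in W$ for which there exists $\xi\in\mathcal M_+(G)$ with $\int_G(\varphi(y)-\varphi(y_0))\,d\gamma=\int_G(\varphi(f(y,u))-\varphi(y))\,d\xi$ for all $\varphi\in C(Y)$. - $k^*(y_0):=\inf_{\gamma\in W_1(y_0)}\int_Gk\,d\gamma$. Equivalently, $k^*(y_0)$ is the infimum of $\int_G k\,d\gamma$ over pairs $(\gamma,\xi)\in\mathcal P(G)\times\mathcal M_+(G)$ with $\gamma\in W$ and $\int_G(\varphi(y_0)-\varphi(y))\,d\gamma+\int_G(\varphi(f(y,u))-\varphi(y))\,d\xi=0$ for all $\varphi\in C(Y)$. *)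

(* Defs.v *)
From HB Require Import structures.
From mathcomp Require Import all_boot all_order all_algebra.
From mathcomp Require Import all_classical all_reals all_analysis.
Set Implicit Arguments. Unset Strict Implicit. Unset Printing Implicit Defensive.
Import Order.TTheory GRing.Theory Num.Theory.
Import numFieldNormedType.Exports.
Local Open Scope classical_set_scope.
Local Open Scope ring_scope.

Section LP.
(* R^m is 'rV[R]_m; U0 a (pointed) pseudometric space, assumed compact and
   Hausdorff (hence a compact metric space) in the theorem. *)
Variables (R : realType) (m : nat) (U0 : pseudoPMetricType R).

Definition ambient := ('rV[R]_m * U0)%type.
Definition borel_ambient := g_sigma_algebraType (@open ambient).

Definition usc_on (Y : set 'rV[R]_m) (U : 'rV[R]_m -> set U0) : Prop :=
  forall y, Y y -> forall V : set U0, open V -> U y `<=` V ->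
    exists2 N : set 'rV[R]_m, nbhs y N &
      forall y', N y' -> Y y' -> U y' `<=` V.

Variables (Y : set 'rV[R]_m) (U : 'rV[R]_m -> set U0)
  (f : ambient -> 'rV[R]_m) (k : ambient -> R).

Definition Aset (y : 'rV[R]_m) : set U0 := [set u | U y u /\ Y (f (y, u))].

Definition Gset : set ambient := [set p | Y p.1 /\ Aset p.1 p.2].

Definition admissible_on (y0 : 'rV[R]_m) (tb : nat)
    (yy : nat -> 'rV[R]_m) (uu : nat -> U0) : Prop :=
  yy 0%N = y0 /\
  forall t, (t < tb)%N -> Aset (yy t) (uu t) /\ yy t.+1 = f (yy t, uu t).

Definition periodic_process (T : nat) (yy : nat -> 'rV[R]_m) (uu : nat -> U0)
  : Prop :=
  (0 < T)%N /\
  (forall t, Aset (yy t) (uu t) /\ yy t.+1 = f (yy t, uu t)) /\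
  (forall t, yy (t + T)%N = yy t /\ uu (t + T)%N = uu t).

Definition ft_reachable (y0 : 'rV[R]_m) (yT : nat -> 'rV[R]_m) : Prop :=
  exists tb (yy : nat -> 'rV[R]_m) (uu : nat -> U0),
    admissible_on y0 tb yy uu /\ yy tb = yT 0%N.

Definition Gamma_per (y0 : 'rV[R]_m) : set {measure set borel_ambient -> \bar R} :=
  [set gam : {measure set borel_ambient -> \bar R} | exists T yy uu, periodic_process T yy uu /\ ft_reachable y0 yy /\
     forall Q : set borel_ambient, measurable Q ->
       gam Q = ((T%:R)^-1 * \sum_(t < T) \1_Q ((yy t, uu t) : borel_ambient))%:E].

Definition V_per (y0 : 'rV[R]_m) : \bar R :=
  ereal_inf [set x : \bar R | exists T yy uu, periodic_process T yy uu /\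
     ft_reachable y0 yy /\
     x = ((T%:R)^-1 * \sum_(t < T) k (yy t, uu t))%:E].

(* P(G): Borel probability measures on G, represented as Borel probability
   measures on R^m x U0 concentrated on the (closed) set G. *)
Definition Wset : set {measure set borel_ambient -> \bar R} :=
  [set gam : {measure set borel_ambient -> \bar R} | gam [set: borel_ambient] = 1%E /\ gam (~` (Gset : set borel_ambient)) = 0%E /\
     forall phi : 'rV[R]_m -> R, {within Y, continuous phi} ->
       (\int[gam]_(p in (Gset : set borel_ambient)) (phi (f p) - phi p.1)%:E
          = 0)%E].

Definition W1set (y0 : 'rV[R]_m) : set {measure set borel_ambient -> \bar R} :=
  [set gam : {measure set borel_ambient -> \bar R} | Wset gam /\
     exists xi : {measure set borel_ambient -> \bar R},
       (xi [set: borel_ambient] < +oo)%E /\ xi (~` (Gset : set borel_ambient)) = 0%E /\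
       forall phi : 'rV[R]_m -> R, {within Y, continuous phi} ->
         (\int[gam]_(p in (Gset : set borel_ambient)) (phi p.1 - phi y0)%:E
          = \int[xi]_(p in (Gset : set borel_ambient)) (phi (f p) - phi p.1)%:E)%E].

Definition kstar (y0 : 'rV[R]_m) : \bar R :=
  ereal_inf [set (\int[gam]_(p in (Gset : set borel_ambient)) (k p)%:E)%E
             | gam in W1set y0].
End LP.

(* Main.v *)
Require Import Defs.
From HB Require Import structures.
From mathcomp Require Import all_boot all_order all_algebra.
From mathcomp Require Import all_classical all_reals all_analysis.
From mathcomp Require Import measurable_realfun.
From mathcomp Require Import lra zify.
Import Order.TTheory GRing.Theory Num.Theory.
Import numFieldNormedType.Exports.
Local Open Scope classical_set_scope.
Local Open Scope ring_scope.


Section KL.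
Context d (T : measurableType d) (R : realType).
Local Open Scope ereal_scope.
Variables (mu : {measure set T -> \bar R}) (S : set T) (mS : measurable S)
  (hS : forall A, A `<=` S -> measurable A) (mu0 : mu (~` S) = 0).
Import HBNNSimple.

Lemma nn_restr (g : T -> \bar R) : (forall x, 0 <= g x) ->
  \int[mu]_x g x = \int[mu]_x (g \_ S) x.
Proof.
move=> g0.
have g'0 : forall x, 0 <= (g \_ S) x by move=> x; apply: erestrict_ge0 => y _; exact: g0.
have mg' : measurable_fun setT (g \_ S).
  move=> _ B mB; rewrite setTI.
  rewrite -[X in measurable X]setIT -(setUCr S) setIUr.
  apply: measurableU; first by apply: hS => x [].
  have [B0|B0] := pselect (B 0).
    rewrite (_ : _ `&` _ = ~` S); first exact: measurableC.
    apply/seteqP; split => x /=; first by case.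
    by move=> nS; split => //; rewrite /patch; case: ifPn => //; rewrite inE.
  rewrite (_ : _ `&` _ = set0) //.
  apply/seteqP; split => x //= [] + nS; rewrite /patch; case: ifPn => //; rewrite inE //.
rewrite !ge0_integralTE //.
apply/eqP; rewrite eq_le; apply/andP; split.
- apply: ge_ereal_sup => _ [h hg <-].
  rewrite -integralT_nnsfun (ge0_negligible_integral _ _ _ _ mu0) //; last 3 first.
  + exact: measurableC.
  + by apply/measurable_EFinP; apply: measurable_funTS.
  + by move=> x _; rewrite lee_fin.
  rewrite setTD setCK integral_nnsfun // mrestrict.
  apply: ereal_sup_ubound; exists (proj_nnsfun h mS) => // x.
  rewrite -mrestrict /patch; case: ifPn => // _; exact: hg.
- apply: ge_ereal_sup => _ [h hg <-].
  apply: ereal_sup_ubound; exists h => // x.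
  apply: (le_trans (hg x)); rewrite /patch; case: ifPn => // _; exact: g0.
Qed.

Lemma int_restr (D : set T) (f : T -> \bar R) :
  \int[mu]_(x in D) f x = \int[mu]_(x in D `&` S) f x.
Proof.
rewrite integralE [RHS]integralE; congr (_ - _);
  rewrite integral_mkcond nn_restr; try (by move=> x; apply: erestrict_ge0 => y _);
  by rewrite -integral_mkcond -integral_mkcondl setIC.
Qed.
End KL.

Section DSum.
Context d (T : measurableType d) (R : realType).
Local Open Scope ereal_scope.

Definition dsum (n : nat) (w : nat -> {nonneg R}) (p : nat -> T)
  : {measure set T -> \bar R} := msum (fun i => mscale (w i) (@dirac _ T (p i) R)) n.

Lemma dsumE n w p A : dsum n w p A = (\sum_(i < n) (w i)%:num * \1_A (p i))%R%:E.
Proof.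
rewrite /dsum /msum /mscale /= -sumEFin; apply: eq_bigr => i _ /=.
by rewrite /dirac.
Qed.

Variables (hsing : forall x : T, measurable [set x]).

Lemma dsum_int n w p (D : set T) (mD : measurable D)
  (hp : forall i, (i < n)%N -> D (p i)) (f : T -> R) :
  \int[dsum n w p]_(x in D) (f x)%:E = (\sum_(i < n) (w i)%:num * f (p i))%R%:E.
Proof.
pose S := [set x | exists2 i, (i < n)%N & x = p i].
have hS : forall A, A `<=` S -> measurable A.
  move=> A AS.
  rewrite (_ : A = \bigcup_(i in [set i | (i < n)%N]) (A `&` [set p i])).
    apply: bigcup_measurable => i _.
    have [Ap|Ap] := pselect (A (p i)).
      rewrite (_ : _ `&` _ = [set p i]) //; apply/seteqP; split => x /=.
        by case.
      by move=> ->.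
    rewrite (_ : _ `&` _ = set0) //; apply/seteqP; split => x //= [Ax xp].
    by apply: Ap; rewrite -xp.
  apply/seteqP; split => x.
    by move=> Ax; have [i ni xp] := AS x Ax; exists i...
  by move=> [i _ []].
have mS : measurable S by apply: hS.
have mu0 : dsum n w p (~` S) = 0.
  rewrite dsumE big1 // => i _; rewrite indicE.
  rewrite (_ : (p i \in ~` S) = false) ?mulr0 //.
  by apply/negbTE; rewrite notin_setE /= => /(_ (ex_intro2 _ _ (nat_of_ord i) (ltn_ord i) erefl)).
rewrite (@int_restr _ _ _ _ _ mS hS mu0).
have mf : forall g : T -> \bar R, measurable_fun (D `&` S) g.
  by move=> g _ B mB; apply: hS => x [[]].
have mDS : measurable (D `&` S) by apply: hS => x [].
have key : forall g : T -> \bar R, (forall x, 0 <= g x) ->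
    \int[dsum n w p]_(x in D `&` S) g x = \sum_(i < n) (w i)%:num%:E * g (p i).
  move=> g g0; rewrite /dsum ge0_integral_measure_sum //.
  apply: eq_bigr => i _; rewrite ge0_integral_mscale //.
  rewrite integral_dirac // diracE.
  have -> : (p i \in D `&` S) = true.
    by apply/asboolP; split; [apply: hp|exists (nat_of_ord i)].
  by rewrite mul1e.
rewrite integralE !key //.
rewrite (eq_bigr (fun i : 'I_n => ((w i)%:num * Num.max (f (p i)) 0%R)%R%:E)); last first.
  by move=> i _; rewrite funeposE /= -EFin_max.
rewrite [X in (_ - X)%E](eq_bigr (fun i : 'I_n => ((w i)%:num * Num.max (- f (p i)) 0%R)%R%:E)); last first.
  by move=> i _; rewrite funenegE /= -EFin_max.
rewrite !sumEFin -EFinB -sumrB; congr EFin; apply: eq_bigr => i _.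
rewrite -mulrBr; congr (_ * _)%R.
by case: (leP (f (p i)) 0%R) => h; case: (leP (- f (p i))%R 0%R) => h'; lra.
Qed.
End DSum.
Arguments dsum {d T R}.


Section Topo.
Variables (R : realType) (m : nat) (U0 : pseudoPMetricType R).
Hypothesis hU : hausdorff_space U0.

Lemma rV_closed1 (y : 'rV[R]_m) : closed [set y].
Proof. exact/accessible_closed_set1/hausdorff_accessible/norm_hausdorff. Qed.

Lemma U_closed1 (u : U0) : closed [set u].
Proof. exact/accessible_closed_set1/hausdorff_accessible. Qed.

Lemma amb_closed1 (p : ambient m U0) : closed [set p].
Proof.
rewrite -[X in closed X]setCK; apply: open_closedC.
rewrite openE => q /= nq; rewrite /interior.
have [e1|n1] := pselect (q.1 = p.1).
  have n2 : q.2 <> p.2 by move=> e2; apply: nq; move: e1 e2; case: q => ? ?; case: p => ? ? /= -> ->.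
  exists (setT, ~` [set p.2]) => /=.
    split; first exact: filterT.
    by apply: open_nbhs_nbhs; split => //; apply: closed_openC; exact: U_closed1.
  by move=> [a b] /= [_ nb] eab; apply: nb; rewrite -eab.
exists (~` [set p.1], setT) => /=.
  split; last exact: filterT.
  by apply: open_nbhs_nbhs; split => //; apply: closed_openC; exact: rV_closed1.
by move=> [a b] /= [na _] eab; apply: na; rewrite -eab.
Qed.

Lemma meas_open (A : set (ambient m U0)) : open A -> measurable (A : set (borel_ambient m U0)).
Proof. by move=> oA; apply: sub_sigma_algebra. Qed.

Lemma meas_closed (A : set (ambient m U0)) : closed A -> measurable (A : set (borel_ambient m U0)).
Proof. by move=> cA; rewrite -[A]setCK; apply: measurableC; apply: meas_open; exact: closed_openC. Qed.


Variables (Y : set 'rV[R]_m) (U : 'rV[R]_m -> set U0)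
  (f : ambient m U0 -> 'rV[R]_m).

Lemma G_closed : compact Y -> usc_on Y U -> (forall y, Y y -> compact (U y)) ->
  continuous f -> closed (Gset Y U f).
Proof.
move=> cptY usc cptU hf.
have cY := compact_closed (@norm_hausdorff _ _) cptY.
rewrite -[X in closed X]setCK; apply: open_closedC.
rewrite openE => q nq; rewrite /interior.
case: q nq => y u nq.
have [Yq|nYq] := pselect (Y y); last first.
  exists (~` Y, setT) => /=.
    split; last exact: filterT.
    by apply: open_nbhs_nbhs; split => //; exact: closed_openC.
  by move=> [a b] /= [na _] [Ya _]; exact: na.
have [Yf|nYf] := pselect (Y (f (y, u))); last first.
  have H : nbhs (y, u) (f @^-1` (~` Y)).
    by apply: (hf (y, u)); apply: open_nbhs_nbhs; split => //; exact: closed_openC.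
  by apply: filterS H => -[a b] /= nx [_ [_ Yfx]]; exact: nx.
have nU : ~ U y u by move=> Uyu; apply: nq; split => //; split.
have cU := compact_closed hU (cptU y Yq).
have : nbhs u (~` U y) by apply: open_nbhs_nbhs; split => //; exact: closed_openC.
move=> /nbhs_ballP[e e0 he].
have e20 : 0 < e / 2 by rewrite divr_gt0.
pose V := ~` closure (ball u (e / 2)).
have UV : U y `<=` V.
  move=> x Ux cx.
  have [z [bz1 bz2]] := cx _ (nbhsx_ballx x _ e20).
  have : ball u e x.
    rewrite (_ : e = e / 2 + e / 2); last by rewrite -splitr.
    exact: ball_triangle bz1 (ball_sym bz2).
  by move=> /he; apply.
have [N NN NU] := usc y Yq V (closed_openC (@closed_closure _ _)) UV.
exists (N, ball u (e / 2)) => /=.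
  by split => //; exact: (nbhsx_ballx _ _ e20).
move=> [a b] /= [Na bb] [Ya [Uab _]].
by apply: (NU a Na Ya b Uab); apply: subset_closure.
Qed.
End Topo.


Lemma tele (V : zmodType) (c : nat -> V) n :
  \sum_(i < n) (c i.+1 - c i) = c n - c 0%N.
Proof. by rewrite -(big_mkord xpredT (fun i => c i.+1 - c i)) telescope_sumr. Qed.

Lemma sbp (R : realFieldType) (c : nat -> R) n :
  \sum_(j < n) ((n.-1 - j)%N%:R * (c j.+1 - c j)) = \sum_(j < n) c j - n%:R * c 0%N.
Proof.
elim: n => [|n IH]; first by rewrite !big_ord0 mul0r subr0.
rewrite big_ord_recr /= subnn mul0r addr0 big_ord_recr /=.
rewrite (eq_bigr (fun j : 'I_n => ((n.-1 - j)%N%:R * (c j.+1 - c j)) + (c j.+1 - c j))); last first.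
  move=> j _; have jn := ltn_ord j.
  have -> : (n.+1.-1 - j = (n.-1 - j).+1)%N by rewrite /=; lia.
  by rewrite -addn1 natrD mulrDl mul1r.
rewrite big_split /= IH tele -natr1; lra.
Qed.


Definition wT (R : realType) (T : nat) : {nonneg R} := ((T%:R)^-1)%:nng.
Definition wX (R : realType) (T tb i : nat) : {nonneg R} :=
  if (i < tb)%N then 1%:nng else ((T.-1 - (i - tb))%N%:R / T%:R)%:nng.

Section Main.
Variables (R : realType) (m : nat) (U0 : pseudoPMetricType R).
Variables (Y : set 'rV[R]_m) (U : 'rV[R]_m -> set U0)
  (f : ambient m U0 -> 'rV[R]_m).
Hypothesis hsing : forall x : borel_ambient m U0, measurable [set x].
Hypothesis mG : measurable (Gset Y U f : set (borel_ambient m U0)).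

Lemma per_G T yy uu : periodic_process Y U f T yy uu ->
  forall t, Gset Y U f (yy t, uu t).
Proof.
move=> [T0 [hA hP]] t; split; last exact: (hA t).1.
case: t => [|s] /=; last by rewrite (hA s).2; exact: (hA s).1.2.
rewrite -(hP 0%N).1 add0n; case: T T0 {hP} => // T' _.
by rewrite (hA T').2; exact: (hA T').1.2.
Qed.

Lemma adm_G y0 tb yy uu : Y y0 -> admissible_on Y U f y0 tb yy uu ->
  forall i, (i < tb)%N -> Gset Y U f (yy i, uu i).
Proof.
move=> Yy0 [h0 hA] i itb; split; last exact: (hA i itb).1.
case: i itb => [|s] itb /=; first by rewrite h0.
have stb : (s < tb)%N by apply: ltn_trans itb.
by rewrite (hA s stb).2; exact: (hA s stb).1.2.
Qed.

Local Open Scope ereal_scope.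

Lemma gam_W1 y0 (Yy0 : Y y0) (gam : {measure set borel_ambient m U0 -> \bar R})
  T yy uu : periodic_process Y U f T yy uu -> ft_reachable Y U f y0 yy ->
  (forall Q : set (borel_ambient m U0), measurable Q ->
     gam Q = ((T%:R)^-1 * \sum_(t < T) \1_Q ((yy t, uu t) : borel_ambient m U0))%R%:E) ->
  W1set Y U f y0 gam.
Proof.
move=> per [tb [y' [u' [adm yT]]]] hgam.
have [T0 [hA hP]] := per.
pose a := fun t => (yy t, uu t) : borel_ambient m U0.
have aG := @per_G _ _ _ per.
have TR0 : (T%:R != 0 :> R)%R by rewrite pnatr_eq0 -lt0n.
pose w : {nonneg R} := wT R T.
have geq : forall A : set (borel_ambient m U0), measurable A -> A `<=` (Gset Y U f : set (borel_ambient m U0)) -> gam A = dsum T (fun=> w) a A.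
  by move=> A mA _; rewrite hgam // dsumE; congr EFin; rewrite mulr_sumr.
have yT0 : yy T = yy 0%N by rewrite -(hP 0%N).1 add0n.
split.
  split.
    rewrite hgam // indicT sumr_const card_ord /=.
    by rewrite -[(1 *+ T)%R]/((T%:R)%R) mulVf.
  split.
    rewrite hgam; last exact: measurableC.
    rewrite big1 ?mulr0 // => i _.
    by rewrite indicE in_setC mem_set //; exact: aG.
  move=> phi _; rewrite (eq_measure_integral (dsum T (fun=> w) a)) //.
  rewrite (@dsum_int _ _ _ hsing) //; last by move=> i _; exact: aG.
  congr EFin; rewrite -mulr_sumr.
  rewrite (eq_bigr (fun i : 'I_T => phi (yy i.+1) - phi (yy i))%R); last first.
    by move=> i _; rewrite /a /= (hA i).2.
  by rewrite (@tele _ (fun i => phi (yy i))) yT0 subrr mulr0.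
pose px i := if (i < tb)%N then ((y' i, u' i) : borel_ambient m U0) else a (i - tb)%N.
pose wx i : {nonneg R} := wX R T tb i.
have pxG : forall i, Gset Y U f (px i).
  move=> i; rewrite /px; case: ifPn => itb; first exact: (@adm_G _ _ _ _ Yy0 adm).
  exact: aG.
exists (dsum (tb + T) wx px); split.
  by rewrite dsumE ltry.
split.
  rewrite dsumE big1 // => i _.
  by rewrite indicE in_setC mem_set ?mulr0 //; exact: pxG.
move=> phi _; rewrite (eq_measure_integral (dsum T (fun=> w) a)) //.
rewrite !(@dsum_int _ _ _ hsing) //; try by move=> i _; first [exact: pxG | exact: aG].
congr EFin; rewrite big_split_ord /=.
rewrite (eq_bigr (fun i : 'I_tb => phi (y' i.+1) - phi (y' i))%R); last first.
  move=> i _; rewrite /wx /wX /px /= ltn_ord /= mul1r.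
  by rewrite (adm.2 i (ltn_ord i)).2.
rewrite (@tele _ (fun i => phi (y' i))) yT adm.1.
rewrite [in RHS](eq_bigr (fun j : 'I_T => (T%:R^-1 * ((T.-1 - j)%N%:R * (phi (yy j.+1) - phi (yy j)))))%R); last first.
  move=> j _; rewrite /wx /wX /px /= ltnNge leq_addr /= addKn /a /= (hA j).2.
  by rewrite mulrAC mulrC.
rewrite -[in RHS]mulr_sumr (@sbp _ (fun j => phi (yy j))).
rewrite -mulr_sumr sumrB sumr_const card_ord.
rewrite !mulrBr mulrA mulVf // mul1r.
rewrite -[(phi y0 *+ T)%R]mulr_natr mulrCA mulVf // mulr1.
lra.
Qed.

End Main.

Theorem proposition2p4 (R : realType) (m : nat) (U0 : pseudoPMetricType R)
  (Y : set 'rV[R]_m) (U : 'rV[R]_m -> set U0)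
  (f : ambient m U0 -> 'rV[R]_m) (k : ambient m U0 -> R) :
  compact Y -> Y !=set0 ->
  compact [set: U0] -> hausdorff_space U0 ->
  usc_on Y U -> (forall y, Y y -> compact (U y)) ->
  continuous f -> continuous k ->
  (forall y, Y y -> Aset Y U f y !=set0) ->
  forall y0, Y y0 ->
    Gamma_per Y U f y0 `<=` W1set Y U f y0 /\
    (kstar Y U f k y0 <= V_per Y U f k y0)%E.
Proof.
move=> cptY Yne cptU0 hU usc cptU hf hk Ane y0 Yy0.
have hsing : forall x : borel_ambient m U0, measurable [set x].
  by move=> x; apply: meas_closed; exact: amb_closed1.
have mG : measurable (Gset Y U f : set (borel_ambient m U0)).
  by apply: meas_closed; exact: G_closed.
split.
  move=> gam [T [yy [uu [per [reach hgam]]]]].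
  exact: (@gam_W1 _ _ _ _ _ _ hsing mG _ Yy0 _ _ _ _ per reach hgam).
apply: le_ereal_inf_tmp => _ [T [yy [uu [per [reach ->]]]]].
have [T0 _] := per.
pose a := fun t => (yy t, uu t) : borel_ambient m U0.
pose w : {nonneg R} := wT R T.
apply: ereal_inf_lbound; exists (dsum T (fun=> w) a).
  apply: (@gam_W1 _ _ _ _ _ _ hsing mG _ Yy0 _ _ _ _ per reach) => Q mQ.
  by rewrite dsumE; congr EFin; rewrite mulr_sumr.
rewrite (@dsum_int _ _ _ hsing) //; last by move=> i _; exact: (@per_G _ _ _ _ _ _ _ _ _ per).
by congr EFin; rewrite mulr_sumr.
Qed.
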